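(* Let $\Sigma=(X,\mathcal U,\phi)$ be a forward complete control system with input space $\mathcal U=L^\infty(\mathbb R_+,U)$ which has the CEP and BRS properties. If there exists a (possibly non-coercive) ISS Lyapunov function for $\Sigma$, then $\Sigma$ is ISS.
   Context: Let $X$, $U$ be Banach spaces. A forward complete control system is a triple $\Sigma=(X,\mathcal U,\phi)$ with $\phi:\mathbb R_+\times X\times\mathcal U\to X$ such that: $\phi(0,x,u)=x$; (causality) $\phi(t,x,u)=\phi(t,x,\tilde u)$ whenever $u|_{[0,t]}=\tilde u|_{[0,t]}$; for each $(x,u)$ the map $t\mapsto\phi(t,x,u)$ is continuous; (cocycle) $\phi(h,\phi(t,x,u),u(t+\cdot))=\phi(t+h,x,u)$ for all $t,h\ge0$, $x\in X$, $u\in\mathcal U$. Comparison functions: $\mathcal K$ = continuous strictly increasing $\gamma:\mathbb R_+\to\mathbb R_+$ with $\gamma(0)=0$; $\mathcal K_\infty$ = unbounded functions in $\mathcal K$; $\mathcal{KL}$ = $\beta:\mathbb R_+^2\to\mathbb R_+$ with $\beta(\cdot,t)\in\mathcal K$ and $\beta(r,\cdot)$ continuous strictly decreasing with limit $0$ for $r>0$. CEP: $\phi(t,0,0)=0$ for all $t\ge0$ and for every $\varepsilon>0$, $h>0$ there is $\delta>0$ such that $t\in[0,h]$, $\|x\|_X\le\delta$, $\|u\|_{\mathcal U}\le\delta$ imply $\|\phi(t,x,u)\|_X\le\varepsilon$. BRS: for all $C,\tau>0$, $\sup\{\|\phi(t,x,u)\|_X:\|x\|_X\le C,\|u\|_{\mathcal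 U}\le C,t\in[0,\tau]\}<\infty$. ISS: there are $\beta\in\mathcal{KL}$, $\gamma\in\mathcal K$ with $\|\phi(t,x,u)\|_X\le\beta(\|x\|_X,t)+\gamma(\|u\|_{\mathcal U})$ for all $x,u,t\ge0$. Dini derivative along trajectories: $\dot V_u(x)=\limsup_{t\to+0}\frac1t(V(\phi(t,x,u))-V(x))$. A continuous $V:X\to\mathbb R_+$ is a non-coercive ISS Lyapunov function for $\Sigma$ if there exist $\psi_2,\alpha\in\mathcal K_\infty$, $\sigma\in\mathcal K$ with $0<V(x)\le\psi_2(\|x\|_X)$ for all $x\ne0$ and $\dot V_u(x)\le-\alpha(\|x\|_X)+\sigma(\|u\|_{\mathcal U})$ for all $x\in X$, $u\in\mathcal U$. *)

(* Defs.v *)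
From Stdlib Require Import Reals Lra List ClassicalEpsilon.
Open Scope R_scope.

Record Banach := {
  car :> Type;
  vzero : car;
  vadd : car -> car -> car;
  vopp : car -> car;
  vscal : R -> car -> car;
  vnorm : car -> R;
  vadd_assoc : forall x y z, vadd x (vadd y z) = vadd (vadd x y) z;
  vadd_comm : forall x y, vadd x y = vadd y x;
  vadd_zero : forall x, vadd x vzero = x;
  vadd_opp : forall x, vadd x (vopp x) = vzero;
  vscal_one : forall x, vscal 1 x = x;
  vscal_assoc : forall a b x, vscal a (vscal b x) = vscal (a * b) x;
  vscal_distr_l : forall a x y, vscal a (vadd x y) = vadd (vscal a x) (vscal a y);
  vscal_distr_r : forall a b x, vscal (a + b) x = vadd (vscal a x) (vscal b x);
  vnorm_nonneg : forall x, 0 <= vnorm x;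
  vnorm_eq0 : forall x, vnorm x = 0 -> x = vzero;
  vnorm_scal : forall a x, vnorm (vscal a x) = Rabs a * vnorm x;
  vnorm_triangle : forall x y, vnorm (vadd x y) <= vnorm x + vnorm y;
  vcomplete : forall s : nat -> car,
    (forall eps, eps > 0 -> exists N, forall n m, (n >= N)%nat -> (m >= N)%nat ->
        vnorm (vadd (s n) (vopp (s m))) < eps) ->
    exists l, forall eps, eps > 0 -> exists N, forall n, (n >= N)%nat ->
        vnorm (vadd (s n) (vopp l)) < eps
}.

Arguments vzero {_}.
Arguments vadd {_}.
Arguments vopp {_}.
Arguments vscal {_}.
Arguments vnorm {_}.

Definition vdist {B : Banach} (x y : B) : R := vnorm (vadd x (vopp y)).

(* m*(S) <= c : for every eta > 0, S is covered by countably many open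
   intervals (a n, b n) of total length <= c + eta. *)
Definition outer_le (S : R -> Prop) (c : R) : Prop :=
  forall eta, eta > 0 -> exists a b : nat -> R,
    (forall n, a n <= b n) /\
    (forall t, S t -> exists n, a n < t < b n) /\
    (forall n, sum_f_R0 (fun k => b k - a k) n <= c + eta).

Definition null_set (S : R -> Prop) : Prop := outer_le S 0.

Definition open_set (G : R -> Prop) : Prop :=
  forall x, G x -> exists d, d > 0 /\ forall y, Rabs (y - x) < d -> G y.

Definition leb_measurable (A : R -> Prop) : Prop :=
  forall eps, eps > 0 -> exists G, open_set G /\ (forall t, A t -> G t) /\
    outer_le (fun t => G t /\ ~ A t) eps.

(* simple functions: finite sums of indicator(A_i) * x_i, A_i measurable *)
Definition simple_eval {U : Banach} (l : list ((R -> Prop) * U)) (t : R) : U :=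
  fold_right (fun p acc =>
     vadd (if excluded_middle_informative (fst p t) then snd p else vzero) acc)
   vzero l.

Definition simple_fun {U : Banach} (l : list ((R -> Prop) * U)) : Prop :=
  Forall (fun p => leb_measurable (fst p)) l.

Definition strongly_measurable {U : Banach} (u : R -> U) : Prop :=
  exists s : nat -> list ((R -> Prop) * U),
    (forall n, simple_fun (s n)) /\
    null_set (fun t => 0 <= t /\
      ~ (forall eps, eps > 0 -> exists N, forall n, (n >= N)%nat ->
            vdist (simple_eval (s n) t) (u t) < eps)).

Definition ess_bounded {U : Banach} (u : R -> U) : Prop :=
  exists M, null_set (fun t => 0 <= t /\ vnorm (u t) > M).

Definition Linf {U : Banach} (u : R -> U) : Prop :=
  strongly_measurable u /\ ess_bounded u.

Definition is_glb (E : R -> Prop) (m : R) : Prop :=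
  (forall x, E x -> m <= x) /\ (forall m', (forall x, E x -> m' <= x) -> m' <= m).

Definition linf_norm {U : Banach} (u : R -> U) : R :=
  epsilon (inhabits 0)
    (is_glb (fun M => 0 <= M /\ null_set (fun t => 0 <= t /\ vnorm (u t) > M))).

Definition ae_eq_on {U : Banach} (t : R) (u v : R -> U) : Prop :=
  null_set (fun s => 0 <= s <= t /\ u s <> v s).

(* phi t x u, meaningful for t >= 0 and u in L^oo; phi is defined on
   representatives, but causality (a.e. version) makes it depend only on
   the equivalence class. *)
Definition control_system {X U : Banach} (phi : R -> X -> (R -> U) -> X) : Prop :=
  (forall x u, Linf u -> phi 0 x u = x) /\
  (forall t x u v, 0 <= t -> Linf u -> Linf v -> ae_eq_on t u v ->
      phi t x u = phi t x v) /\
  (forall x u, Linf u -> forall t, 0 <= t -> forall eps, eps > 0 ->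
      exists d, d > 0 /\ forall s, 0 <= s -> Rabs (s - t) < d ->
        vdist (phi s x u) (phi t x u) < eps) /\
  (forall t h x u, 0 <= t -> 0 <= h -> Linf u ->
      phi h (phi t x u) (fun s => u (t + s)) = phi (t + h) x u).

Definition zero_input {U : Banach} : R -> U := fun _ => vzero.

Definition CEP {X U : Banach} (phi : R -> X -> (R -> U) -> X) : Prop :=
  (forall t, 0 <= t -> phi t vzero zero_input = vzero) /\
  (forall eps h, eps > 0 -> h > 0 -> exists d, d > 0 /\
     forall t x u, 0 <= t <= h -> Linf u -> vnorm x <= d -> linf_norm u <= d ->
       vnorm (phi t x u) <= eps).

Definition BRS {X U : Banach} (phi : R -> X -> (R -> U) -> X) : Prop :=
  forall C tau, C > 0 -> tau > 0 -> exists M,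
    forall t x u, 0 <= t <= tau -> Linf u -> vnorm x <= C -> linf_norm u <= C ->
      vnorm (phi t x u) <= M.

Definition cont_on_Rplus (f : R -> R) : Prop :=
  forall r, 0 <= r -> forall eps, eps > 0 -> exists d, d > 0 /\
    forall s, 0 <= s -> Rabs (s - r) < d -> Rabs (f s - f r) < eps.

Definition class_K (g : R -> R) : Prop :=
  (forall r, 0 <= r -> 0 <= g r) /\
  cont_on_Rplus g /\
  (forall r s, 0 <= r -> r < s -> g r < g s) /\
  g 0 = 0.

Definition class_Kinf (g : R -> R) : Prop :=
  class_K g /\ (forall M, exists r, 0 <= r /\ g r > M).

Definition class_KL (b : R -> R -> R) : Prop :=
  (forall t, 0 <= t -> class_K (fun r => b r t)) /\
  (forall r, r > 0 ->
     cont_on_Rplus (b r) /\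
     (forall t s, 0 <= t -> t < s -> b r s < b r t) /\
     (forall eps, eps > 0 -> exists T, forall t, t >= T -> Rabs (b r t) < eps)).

Definition ISS {X U : Banach} (phi : R -> X -> (R -> U) -> X) : Prop :=
  exists beta gamma, class_KL beta /\ class_K gamma /\
    forall x u t, Linf u -> 0 <= t ->
      vnorm (phi t x u) <= beta (vnorm x) t + gamma (linf_norm u).

Definition limsup0_le (f : R -> R) (c : R) : Prop :=
  forall eps, eps > 0 -> exists d, d > 0 /\ forall t, 0 < t < d -> f t <= c + eps.

Definition dini_le {X U : Banach} (phi : R -> X -> (R -> U) -> X)
  (V : X -> R) (x : X) (u : R -> U) (c : R) : Prop :=
  limsup0_le (fun t => (V (phi t x u) - V x) / t) c.

Definition continuous_on_X {X : Banach} (V : X -> R) : Prop :=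
  forall x eps, eps > 0 -> exists d, d > 0 /\
    forall y, vdist y x < d -> Rabs (V y - V x) < eps.

Definition noncoercive_ISS_Lyapunov {X U : Banach}
  (phi : R -> X -> (R -> U) -> X) (V : X -> R) : Prop :=
  continuous_on_X V /\ (forall x, 0 <= V x) /\
  exists psi2 alpha sigma, class_Kinf psi2 /\ class_Kinf alpha /\ class_K sigma /\
    (forall x, x <> vzero -> 0 < V x <= psi2 (vnorm x)) /\
    (forall x u, Linf u ->
       dini_le phi V x u (- alpha (vnorm x) + sigma (linf_norm u))).

(* Main.v *)
Require Import Defs.
From Stdlib Require Import Reals Lra List ClassicalEpsilon Classical.
Open Scope R_scope.

Definition Rsup (E : R -> Prop) : R := epsilon (inhabits 0) (fun m => is_lub E m).
Lemma Rsup_spec E : (exists x, E x) -> bound E -> is_lub E (Rsup E).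
Proof. intros H1 H2. unfold Rsup. apply epsilon_spec.
  destruct (completeness E H2 H1) as [m Hm]. exists m; exact Hm. Qed.

Definition clamp01 (x : R) : R := Rmax 0 (Rmin 1 x).
Lemma clamp_bounds x : 0 <= clamp01 x <= 1.
Proof. unfold clamp01, Rmax, Rmin; repeat destruct Rle_dec; lra. Qed.
Lemma clamp_one x : 1 <= x -> clamp01 x = 1.
Proof. unfold clamp01, Rmax, Rmin; repeat destruct Rle_dec; lra. Qed.
Lemma clamp_zero x : x <= 0 -> clamp01 x = 0.
Proof. unfold clamp01, Rmax, Rmin; repeat destruct Rle_dec; lra. Qed.
Lemma clamp_pos x : 0 < clamp01 x -> 0 < x.
Proof. unfold clamp01, Rmax, Rmin; repeat destruct Rle_dec; lra. Qed.
Lemma clamp_mono x y : x <= y -> clamp01 x <= clamp01 y.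
Proof. unfold clamp01, Rmax, Rmin; repeat destruct Rle_dec; lra. Qed.
Lemma clamp_lip x y : x <= y -> clamp01 y - clamp01 x <= y - x.
Proof. unfold clamp01, Rmax, Rmin; repeat destruct Rle_dec; lra. Qed.

Definition Th (r r' : R) := clamp01 (2 * r / r' - 1).
Definition Ka (t t' : R) := clamp01 (t' + 1 - t).

Definition KS (P : R -> R -> R -> Prop) r t q :=
  q = 0 \/ exists r' t' p, 0 < r' /\ 0 <= t' /\ P r' t' p /\ 0 <= p /\ q = p * Th r r' * Ka t t'.
Definition KE P r t := Rsup (KS P r t).
Definition KB P r t := KE P r t + r / (1 + t).

Definition KH1 (P : R -> R -> R -> Prop) := forall eps, eps > 0 -> exists d, d > 0 /\
  forall r t p, 0 <= r <= d -> 0 <= t -> P r t p -> p <= eps.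
Definition KH2 (P : R -> R -> R -> Prop) := forall R0, exists M,
  forall r t p, 0 <= r <= R0 -> 0 <= t -> P r t p -> p <= M.
Definition KH3 (P : R -> R -> R -> Prop) := forall eps, eps > 0 -> forall R0, exists T,
  forall r t p, 0 <= r <= R0 -> 0 <= t -> T <= t -> P r t p -> p <= eps.

Lemma Th_pos_lt r r' : 0 < r' -> 0 < Th r r' -> r' < 2 * r.
Proof. unfold Th; intros H H1. apply clamp_pos in H1.
  assert (1 < 2 * r / r') by lra.
  apply Rmult_lt_reg_r with (/ r'). apply Rinv_0_lt_compat; lra.
  rewrite Rinv_r by lra. unfold Rdiv in H0. lra. Qed.

Lemma Th_bounds r r' : 0 <= Th r r' <= 1.
Proof. apply clamp_bounds. Qed.
Lemma Ka_bounds r r' : 0 <= Ka r r' <= 1.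
Proof. apply clamp_bounds. Qed.

Lemma KS_elem P r t q M R0 :
  (forall r' t' p, 0 <= r' <= R0 -> 0 <= t' -> P r' t' p -> p <= M) ->
  2 * r <= R0 -> KS P r t q -> q <= Rmax 0 M.
Proof.
  intros HM Hr [Hq | [r' [t' [p [Hr' [Ht' [HP [Hp Hq]]]]]]]].
  - subst; apply Rmax_l.
  - subst q. destruct (Th_bounds r r') as [T0 T1]. destruct (Ka_bounds t t') as [K0 K1].
    destruct (Rle_lt_or_eq_dec 0 (Th r r') T0) as [Tp | Tz].
    + pose proof (Th_pos_lt r r' Hr' Tp).
      assert (p <= M) by (apply (HM r' t' p); auto; lra).
      assert (p * Th r r' * Ka t t' <= p) .
      { rewrite Rmult_assoc. assert (Th r r' * Ka t t' <= 1) by nra. nra. }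
      pose proof (Rmax_r 0 M). lra.
    + rewrite <- Tz. rewrite Rmult_0_r, Rmult_0_l. apply Rmax_l.
Qed.

Lemma KE_lub P r t : KH2 P -> 0 <= r -> is_lub (KS P r t) (KE P r t).
Proof.
  intros H2 Hr. apply Rsup_spec. exists 0; left; auto.
  destruct (H2 (2 * r)) as [M HM]. exists (Rmax 0 M). intros q Hq.
  eapply KS_elem; eauto. lra.
Qed.

Lemma KE_ge0 P r t : KH2 P -> 0 <= r -> 0 <= KE P r t.
Proof. intros H2 Hr. destruct (KE_lub P r t H2 Hr) as [Hu _]. apply Hu. left; auto. Qed.

Lemma KE_le P r t b : KH2 P -> 0 <= r -> (forall q, KS P r t q -> q <= b) -> KE P r t <= b.
Proof. intros H2 Hr Hb. destruct (KE_lub P r t H2 Hr) as [_ Hl]. apply Hl. exact Hb. Qed.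

Lemma KE_ge P r t q : KH2 P -> 0 <= r -> KS P r t q -> q <= KE P r t.
Proof. intros H2 Hr Hq. destruct (KE_lub P r t H2 Hr) as [Hu _]. apply Hu; auto. Qed.

Lemma KE_maj P r t p : KH1 P -> KH2 P -> 0 <= r -> 0 <= t -> P r t p -> p <= KE P r t.
Proof.
  intros H1 H2 Hr Ht HP.
  pose proof (KE_ge0 P r t H2 Hr).
  destruct (Rle_or_lt p 0) as [Hp|Hp]; [lra|].
  destruct (Rle_lt_or_eq_dec 0 r Hr) as [Hr'|Hr'].
  - apply KE_ge; auto. right. exists r, t, p. repeat split; auto; try lra.
    unfold Th, Ka. rewrite (clamp_one (t + 1 - t)) by lra.
    rewrite (clamp_one (2 * r / r - 1)). ring.
    unfold Rdiv. rewrite Rmult_assoc, Rinv_r by lra. lra.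
  - subst r. exfalso. destruct (H1 (p/2)) as [d [Hd Hd']]. lra.
    assert (p <= p/2) by (apply (Hd' 0 t p); auto; lra). lra.
Qed.

Lemma KE_small P : KH1 P -> KH2 P -> forall eps, eps > 0 -> exists d, d > 0 /\
  forall r t, 0 <= r <= d -> KE P r t <= eps.
Proof.
  intros H1 H2 eps He. destruct (H1 eps He) as [d [Hd Hd']].
  exists (d/2). split. lra. intros r t Hr. apply KE_le; auto. lra.
  intros q [Hq | [r' [t' [p [Hr' [Ht' [HP [Hp Hq]]]]]]]]. lra.
  subst q. destruct (Th_bounds r r') as [T0 T1]. destruct (Ka_bounds t t') as [K0 K1].
  destruct (Rle_lt_or_eq_dec 0 (Th r r') T0) as [Tp | Tz].
  + pose proof (Th_pos_lt r r' Hr' Tp).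
    assert (p <= eps) by (apply (Hd' r' t' p); auto; lra).
    assert (Th r r' * Ka t t' <= 1) by nra. rewrite Rmult_assoc. nra.
  + rewrite <- Tz. lra.
Qed.

Lemma KE_zero P t : KH2 P -> KE P 0 t = 0.
Proof.
  intros H2. apply Rle_antisym. apply KE_le; auto. lra.
  intros q [Hq | [r' [t' [p [Hr' [Ht' [HP [Hp Hq]]]]]]]]. lra.
  subst q. unfold Th. rewrite clamp_zero. lra. unfold Rdiv. lra.
  apply KE_ge0; auto; lra.
Qed.

Lemma Th_mono r r1 r' : 0 < r' -> r <= r1 -> Th r r' <= Th r1 r'.
Proof. intros. unfold Th. apply clamp_mono. unfold Rdiv.
  assert (0 < / r') by (apply Rinv_0_lt_compat; lra). nra. Qed.

Lemma Ka_mono t t1 t' : t <= t1 -> Ka t1 t' <= Ka t t'.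
Proof. intros. unfold Ka. apply clamp_mono. lra. Qed.

Lemma KE_mono_r P r r1 t : KH2 P -> 0 <= r -> r <= r1 -> KE P r t <= KE P r1 t.
Proof.
  intros H2 Hr Hr1. apply KE_le; auto.
  intros q [Hq | [r' [t' [p [Hr' [Ht' [HP [Hp Hq]]]]]]]].
  - subst; apply KE_ge0; auto; lra.
  - apply Rle_trans with (p * Th r1 r' * Ka t t').
    + subst q. pose proof (Th_mono r r1 r' Hr' Hr1). pose proof (Ka_bounds t t').
      apply Rmult_le_compat_r. lra. apply Rmult_le_compat_l; lra.
    + apply KE_ge; auto; try lra. right. exists r', t', p. repeat split; auto.
Qed.

Lemma KE_mono_t P r t t1 : KH2 P -> 0 <= r -> t <= t1 -> KE P r t1 <= KE P r t.
Proof.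
  intros H2 Hr Ht. apply KE_le; auto.
  intros q [Hq | [r' [t' [p [Hr' [Ht' [HP [Hp Hq]]]]]]]].
  - subst; apply KE_ge0; auto; lra.
  - apply Rle_trans with (p * Th r r' * Ka t t').
    + subst q. pose proof (Ka_mono t t1 t' Ht). pose proof (Th_bounds r r').
      apply Rmult_le_compat_l. nra. lra.
    + apply KE_ge; auto; try lra. right. exists r', t', p. repeat split; auto.
Qed.
Lemma div_help r r1 r' : 0 < r -> r < r' -> r <= r1 -> 2*r1/r' - 2*r/r' <= 2*(r1-r)/r.
Proof.
  intros. unfold Rdiv.
  assert (/ r' <= / r) by (apply Rinv_le_contravar; lra).
  assert (0 < / r') by (apply Rinv_0_lt_compat; lra).
  replace (2 * r1 * / r' - 2 * r * / r') with (2 * (r1 - r) * / r') by ring.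
  apply Rmult_le_compat_l; lra.
Qed.

Lemma KE_lip_r P r r1 t M : KH2 P -> 0 < r -> r <= r1 ->
  (forall r' t' p, 0 <= r' <= 2 * r1 -> 0 <= t' -> P r' t' p -> p <= M) ->
  KE P r1 t <= KE P r t + Rmax 0 M * (2 * (r1 - r) / r).
Proof.
  intros H2 Hr Hr1 HM.
  assert (0 <= 2 * (r1 - r) / r).
  { unfold Rdiv. assert (0 < / r) by (apply Rinv_0_lt_compat; lra). nra. }
  pose proof (Rmax_l 0 M). pose proof (Rmax_r 0 M).
  pose proof (KE_ge0 P r t H2 ltac:(lra)).
  apply KE_le; auto; try lra.
  intros q [Hq | [r' [t' [p [Hr' [Ht' [HP [Hp Hq]]]]]]]].
  - subst. nra.
  - subst q. destruct (Th_bounds r1 r') as [T0 T1]. destruct (Ka_bounds t t') as [K0 K1].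
    destruct (Rle_lt_or_eq_dec 0 (Th r1 r') T0) as [Tp | Tz].
    + pose proof (Th_pos_lt r1 r' Hr' Tp).
      assert (p <= M) by (apply (HM r' t' p); auto; lra).
      assert (Hq : p * Th r r' * Ka t t' <= KE P r t).
      { apply KE_ge; auto; try lra. right. exists r', t', p. repeat split; auto. }
      pose proof (Th_mono r r1 r' Hr' Hr1).
      assert (Hd : Th r1 r' - Th r r' <= 2 * (r1 - r) / r).
      { destruct (Rle_or_lt r' r).
        - unfold Th at 2. rewrite clamp_one. lra.
          assert (1 <= r / r'). { apply Rmult_le_reg_r with r'. lra.
            unfold Rdiv. rewrite Rmult_assoc, Rinv_l by lra. lra. }
          unfold Rdiv in *. lra.
        - unfold Th. eapply Rle_trans. apply clamp_lip.
          assert (2*r/r' <= 2*r1/r'). { unfold Rdiv. assert (0 < / r') by (apply Rinv_0_lt_compat; lra). nra. }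
          lra. pose proof (div_help r r1 r' Hr H7 Hr1). lra. }
      assert (p * Th r1 r' * Ka t t' - p * Th r r' * Ka t t' = p * Ka t t' * (Th r1 r' - Th r r')) by ring.
      assert (p * Ka t t' <= Rmax 0 M) by nra.
      assert (p * Ka t t' * (Th r1 r' - Th r r') <= Rmax 0 M * (2 * (r1 - r) / r)).
      { apply Rle_trans with (Rmax 0 M * (Th r1 r' - Th r r')). apply Rmult_le_compat_r; lra.
        apply Rmult_le_compat_l; lra. }
      lra.
    + rewrite <- Tz. nra.
Qed.

Lemma KE_lip_t P r t t1 M : KH2 P -> 0 <= r -> t <= t1 ->
  (forall r' t' p, 0 <= r' <= 2 * r -> 0 <= t' -> P r' t' p -> p <= M) ->
  KE P r t <= KE P r t1 + Rmax 0 M * (t1 - t).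
Proof.
  intros H2 Hr Ht HM.
  pose proof (Rmax_l 0 M). pose proof (Rmax_r 0 M).
  pose proof (KE_ge0 P r t1 H2 Hr).
  apply KE_le; auto.
  intros q [Hq | [r' [t' [p [Hr' [Ht' [HP [Hp Hq]]]]]]]].
  - subst. nra.
  - subst q. destruct (Th_bounds r r') as [T0 T1]. destruct (Ka_bounds t t') as [K0 K1].
    destruct (Rle_lt_or_eq_dec 0 (Th r r') T0) as [Tp | Tz].
    + pose proof (Th_pos_lt r r' Hr' Tp).
      assert (p <= M) by (apply (HM r' t' p); auto; lra).
      assert (Hq : p * Th r r' * Ka t1 t' <= KE P r t1).
      { apply KE_ge; auto; try lra. right. exists r', t', p. repeat split; auto. }
      pose proof (Ka_mono t t1 t' Ht).
      assert (Ka t t' - Ka t1 t' <= t1 - t).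
      { unfold Ka. eapply Rle_trans. apply clamp_lip with (x := t' + 1 - t1). lra. lra. }
      assert (p * Th r r' * Ka t t' - p * Th r r' * Ka t1 t' = p * Th r r' * (Ka t t' - Ka t1 t')) by ring.
      assert (p * Th r r' <= Rmax 0 M) by nra.
      assert (p * Th r r' * (Ka t t' - Ka t1 t') <= Rmax 0 M * (t1 - t)).
      { apply Rle_trans with (Rmax 0 M * (Ka t t' - Ka t1 t')). apply Rmult_le_compat_r; nra.
        apply Rmult_le_compat_l; lra. }
      lra.
    + rewrite <- Tz. nra.
Qed.

Lemma KE_decay P : KH2 P -> KH3 P -> forall eps, eps > 0 -> forall r, 0 <= r ->
  exists T, 0 <= T /\ forall t, T <= t -> KE P r t <= eps.
Proof.
  intros H2 H3 eps He r Hr. destruct (H3 eps He (2 * r)) as [T0 HT0].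
  exists (Rmax 0 (T0 + 1)). split. apply Rmax_l. intros t Ht.
  pose proof (Rmax_l 0 (T0+1)). pose proof (Rmax_r 0 (T0+1)).
  apply KE_le; auto.
  intros q [Hq | [r' [t' [p [Hr' [Ht' [HP [Hp Hq]]]]]]]]. lra.
  subst q. destruct (Th_bounds r r') as [T0' T1]. destruct (Ka_bounds t t') as [K0 K1].
  destruct (Rle_lt_or_eq_dec 0 (Th r r') T0') as [Tp | Tz].
  + destruct (Rle_lt_or_eq_dec 0 (Ka t t') K0) as [Kp | Kz].
    * pose proof (Th_pos_lt r r' Hr' Tp). unfold Ka in Kp. apply clamp_pos in Kp.
      assert (p <= eps) by (apply (HT0 r' t' p); auto; lra).
      assert (Th r r' * Ka t t' <= 1) by nra. rewrite Rmult_assoc. nra.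
    * rewrite <- Kz. lra.
  + rewrite <- Tz. lra.
Qed.
Lemma lin_mono r s t : 0 <= t -> r < s -> r / (1 + t) < s / (1 + t).
Proof. intros. unfold Rdiv. apply Rmult_lt_compat_r. apply Rinv_0_lt_compat; lra. lra. Qed.
Lemma lin_bounds r t : 0 <= r -> 0 <= t -> 0 <= r / (1 + t) <= r.
Proof. intros. split. unfold Rdiv. apply Rmult_le_pos. lra. left; apply Rinv_0_lt_compat; lra.
  apply Rmult_le_reg_r with (1 + t). lra. unfold Rdiv. rewrite Rmult_assoc, Rinv_l by lra. nra. Qed.
Lemma lin_decr r s t : 0 < r -> 0 <= t -> t < s -> r / (1 + s) < r / (1 + t).
Proof. intros. unfold Rdiv. apply Rmult_lt_compat_l. lra. apply Rinv_lt_contravar; nra. Qed.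
Lemma lin_small r e t : 0 <= r -> e > 0 -> 0 <= t -> 2 * r / e <= t -> r / (1 + t) < e / 2.
Proof. intros. assert (2 * r <= e * t).
  { apply Rmult_le_reg_r with (/ e). apply Rinv_0_lt_compat; lra.
    replace (e * t * / e) with t by (field; lra). unfold Rdiv in H2. lra. }
  apply Rmult_lt_reg_r with (2 * (1 + t)). lra.
  replace (r / (1 + t) * (2 * (1 + t))) with (2 * r) by (field; lra).
  replace (e / 2 * (2 * (1 + t))) with (e + e * t) by (field; lra). lra. Qed.
Lemma lin_lip_t r s t : 0 <= r -> 0 <= s -> 0 <= t -> Rabs (r / (1 + s) - r / (1 + t)) <= r * Rabs (s - t).
Proof. intros.
  replace (r / (1 + s) - r / (1 + t)) with ((r * (t - s)) * / ((1 + s) * (1 + t))) by (field; lra).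
  rewrite Rabs_mult. rewrite (Rabs_right (/ _)).
  2:{ left. apply Rinv_0_lt_compat. nra. }
  rewrite Rabs_mult, (Rabs_right r) by lra. rewrite (Rabs_minus_sym t s).
  assert (/ ((1 + s) * (1 + t)) <= 1).
  { rewrite <- Rinv_1. apply Rinv_le_contravar. lra. nra. }
  pose proof (Rabs_pos (s - t)). set (a := Rabs (s - t)) in *. set (b := / ((1 + s) * (1 + t))) in *.
  assert (0 <= b) by (unfold b; left; apply Rinv_0_lt_compat; nra).
  assert (0 <= r * a) by nra. nra. Qed.
Lemma inv_half r0 s : 0 < r0 -> r0 / 2 <= s -> / s <= 2 * / r0.
Proof. intros. replace (2 * / r0) with (/ (r0 / 2)) by (field; lra).
  apply Rinv_le_contravar; lra. Qed.

Theorem KLmaj P : KH1 P -> KH2 P -> KH3 P ->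
  exists beta, class_KL beta /\ forall r t p, 0 <= r -> 0 <= t -> P r t p -> p <= beta r t.
Proof.
  intros H1 H2 H3. exists (KB P). split.
  2:{ intros r t p Hr Ht HP. unfold KB. pose proof (KE_maj P r t p H1 H2 Hr Ht HP).
      pose proof (lin_bounds r t Hr Ht). lra. }
  split.
  - intros t Ht. repeat split.
    + intros r Hr. unfold KB. pose proof (KE_ge0 P r t H2 Hr). pose proof (lin_bounds r t Hr Ht). lra.
    + intros r0 Hr0 eps He. destruct (Rle_lt_or_eq_dec 0 r0 Hr0) as [Hp | Hz].
      * destruct (H2 (4 * r0)) as [M HM]. set (K := Rmax 0 M).
        assert (HK : 0 <= K) by apply Rmax_l.
        set (C := 4 * K * / r0 + 1).
        assert (0 < / r0) by (apply Rinv_0_lt_compat; lra).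
        assert (HC : 0 < C) by (unfold C; nra).
        exists (Rmin (r0 / 2) (eps / C)). split.
        { apply Rmin_pos. lra. unfold Rdiv. apply Rmult_lt_0_compat. lra. apply Rinv_0_lt_compat; lra. }
        intros s Hs Hsd. pose proof (Rmin_l (r0/2) (eps/C)) as Hm1. pose proof (Rmin_r (r0/2) (eps/C)) as Hm2.
        assert (HKE : Rabs (KE P s t - KE P r0 t) <= 4 * K * / r0 * Rabs (s - r0)).
        { destruct (Rle_or_lt r0 s) as [Hrs | Hrs].
          - pose proof (KE_lip_r P r0 s t M H2 Hp Hrs) as HL.
            assert (HA : KE P s t <= KE P r0 t + K * (2 * (s - r0) / r0)).
            { apply HL. intros r' t' p Hr' Ht' HP. apply (HM r' t' p); auto.
              apply Rabs_def2 in Hsd. lra. }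
            pose proof (KE_mono_r P r0 s t H2 Hr0 Hrs).
            rewrite Rabs_right by lra. rewrite Rabs_right by lra. unfold Rdiv in HA.
            assert (K * (2 * (s - r0) * / r0) <= 4 * K * / r0 * (s - r0)).
            { assert (0 <= K * (s - r0) * / r0) by (apply Rmult_le_pos; [apply Rmult_le_pos|]; lra). nra. }
            lra.
          - apply Rabs_def2 in Hsd.
            assert (Hs2 : r0 / 2 <= s) by lra.
            pose proof (KE_lip_r P s r0 t M H2 ltac:(lra) ltac:(lra)) as HL.
            assert (HA : KE P r0 t <= KE P s t + K * (2 * (r0 - s) / s)).
            { apply HL. intros r' t' p Hr' Ht' HP. apply (HM r' t' p); auto. lra. }
            pose proof (KE_mono_r P s r0 t H2 Hs ltac:(lra)).
            rewrite Rabs_left1 by lra. rewrite Rabs_left by lra.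
            pose proof (inv_half r0 s Hp Hs2). unfold Rdiv in HA.
            assert (K * (2 * (r0 - s) * / s) <= 4 * K * / r0 * (r0 - s)).
            { assert (0 <= K * (r0 - s)) by nra.
              replace (K * (2 * (r0 - s) * / s)) with (2 * (K * (r0 - s)) * / s) by ring.
              replace (4 * K * / r0 * (r0 - s)) with (2 * (K * (r0 - s)) * (2 * / r0)) by ring.
              apply Rmult_le_compat_l; lra. }
            lra. }
        unfold KB.
        replace (KE P s t + s / (1 + t) - (KE P r0 t + r0 / (1 + t))) with
          ((KE P s t - KE P r0 t) + (s / (1 + t) - r0 / (1 + t))) by ring.
        eapply Rle_lt_trans. apply Rabs_triang.
        assert (Rabs (s / (1 + t) - r0 / (1 + t)) <= Rabs (s - r0)).
        { replace (s / (1 + t) - r0 / (1 + t)) with ((s - r0) / (1 + t)) by (field; lra).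
          unfold Rdiv. rewrite Rabs_mult. rewrite (Rabs_right (/ (1+t))).
          2:{ left; apply Rinv_0_lt_compat; lra. }
          assert (/ (1 + t) <= 1). { rewrite <- Rinv_1. apply Rinv_le_contravar; lra. }
          pose proof (Rabs_pos (s - r0)). nra. }
        assert (HC2 : C * Rabs (s - r0) < eps).
        { apply Rmult_lt_reg_r with (/ C). apply Rinv_0_lt_compat; lra.
          replace (C * Rabs (s - r0) * / C) with (Rabs (s - r0)) by (field; lra).
          unfold Rdiv in Hm2. lra. }
        unfold C in HC2. lra.
      * subst r0. destruct (KE_small P H1 H2 (eps / 2) ltac:(lra)) as [d [Hd Hd']].
        exists (Rmin d (eps / 2)). split. apply Rmin_pos; lra.
        intros s Hs Hsd. rewrite Rminus_0_r, Rabs_right in Hsd by lra.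
        pose proof (Rmin_l d (eps/2)). pose proof (Rmin_r d (eps/2)).
        unfold KB. rewrite KE_zero by auto.
        pose proof (Hd' s t ltac:(lra)). pose proof (KE_ge0 P s t H2 Hs).
        pose proof (lin_bounds s t Hs Ht). unfold Rdiv at 2. rewrite Rmult_0_l.
        rewrite Rplus_0_r, Rminus_0_r, Rabs_right by lra. lra.
    + intros r s Hr Hrs. unfold KB. pose proof (KE_mono_r P r s t H2 Hr ltac:(lra)).
      pose proof (lin_mono r s t Ht Hrs). lra.
    + unfold KB. rewrite KE_zero by auto. unfold Rdiv. ring.
  - intros r Hr. repeat split.
    + intros t0 Ht0 eps He. destruct (H2 (2 * r)) as [M HM]. set (K := Rmax 0 M).
      assert (HK : 0 <= K) by apply Rmax_l.
      exists (eps / (K + r + 1)). split.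
      { unfold Rdiv. apply Rmult_lt_0_compat. lra. apply Rinv_0_lt_compat; lra. }
      intros s Hs Hsd.
      assert (HKE : Rabs (KE P r s - KE P r t0) <= K * Rabs (s - t0)).
      { destruct (Rle_or_lt t0 s) as [Hts | Hts].
        - pose proof (KE_lip_t P r t0 s M H2 ltac:(lra) Hts HM).
          pose proof (KE_mono_t P r t0 s H2 ltac:(lra) Hts).
          rewrite Rabs_left1 by lra. rewrite Rabs_right by lra. fold K in H. lra.
        - pose proof (KE_lip_t P r s t0 M H2 ltac:(lra) ltac:(lra) HM).
          pose proof (KE_mono_t P r s t0 H2 ltac:(lra) ltac:(lra)).
          rewrite Rabs_right by lra. rewrite Rabs_left by lra. fold K in H. lra. }
      pose proof (lin_lip_t r s t0 ltac:(lra) Hs Ht0).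
      unfold KB.
      replace (KE P r s + r / (1 + s) - (KE P r t0 + r / (1 + t0))) with
          ((KE P r s - KE P r t0) + (r / (1 + s) - r / (1 + t0))) by ring.
      eapply Rle_lt_trans. apply Rabs_triang.
      assert ((K + r + 1) * Rabs (s - t0) < eps).
      { apply Rmult_lt_reg_r with (/ (K + r + 1)). apply Rinv_0_lt_compat; lra.
        replace ((K + r + 1) * Rabs (s - t0) * / (K + r + 1)) with (Rabs (s - t0)) by (field; lra).
        unfold Rdiv in Hsd. lra. }
      pose proof (Rabs_pos (s - t0)). nra.
    + intros t s Ht Hts. unfold KB. pose proof (KE_mono_t P r t s H2 ltac:(lra) ltac:(lra)).
      pose proof (lin_decr r s t Hr Ht Hts). lra.
    + intros eps He. destruct (KE_decay P H2 H3 (eps/2) ltac:(lra) r ltac:(lra)) as [T1 [HT1 HT1']].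
      exists (Rmax T1 (2 * r / eps)). intros t Ht.
      pose proof (Rmax_l T1 (2 * r / eps)). pose proof (Rmax_r T1 (2 * r / eps)).
      pose proof (HT1' t ltac:(lra)). pose proof (KE_ge0 P r t H2 ltac:(lra)).
      pose proof (lin_small r eps t ltac:(lra) He ltac:(lra) ltac:(lra)).
      pose proof (lin_bounds r t ltac:(lra) ltac:(lra)).
      unfold KB. rewrite Rabs_right by lra. lra.
Qed.
Lemma vscal0 (B : Banach) (x : B) : vscal 0 x = vzero.
Proof.
  set (y := vscal 0 x).
  assert (Hy : y = vadd y y) by (unfold y; rewrite <- vscal_distr_r; f_equal; ring).
  assert (vadd (vadd y y) (vopp y) = y).
  { rewrite <- vadd_assoc, vadd_opp, vadd_zero. reflexivity. }
  rewrite <- Hy, vadd_opp in H. auto.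
Qed.

Lemma vnorm_zero (B : Banach) : vnorm (@vzero B) = 0.
Proof. rewrite <- (vscal0 B vzero), vnorm_scal, Rabs_R0. ring. Qed.

Lemma vinv_unique (B : Banach) (x y : B) : vadd y x = vzero -> y = vopp x.
Proof. intros H.
  rewrite <- (vadd_zero B y), <- (vadd_opp B x), vadd_assoc, H, vadd_comm, vadd_zero. auto. Qed.

Lemma vopp_scal (B : Banach) (x : B) : vopp x = vscal (-1) x.
Proof. symmetry. apply vinv_unique.
  rewrite <- (vscal_one B x) at 2. rewrite <- vscal_distr_r.
  replace (-1 + 1) with 0 by ring. apply vscal0. Qed.

Lemma vnorm_opp (B : Banach) (x : B) : vnorm (vopp x) = vnorm x.
Proof. rewrite vopp_scal, vnorm_scal. rewrite Rabs_left by lra. ring. Qed.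

Lemma vopp_zero (B : Banach) : vopp (@vzero B) = vzero.
Proof. rewrite <- (vadd_zero B (vopp vzero)), vadd_comm, vadd_opp. auto. Qed.

Lemma vdist_sym (B : Banach) (x y : B) : vdist x y = vdist y x.
Proof. unfold vdist. rewrite <- vnorm_opp. f_equal.
  rewrite !vopp_scal, vscal_distr_l, vscal_assoc.
  replace (-1 * -1) with 1 by ring. rewrite vscal_one. apply vadd_comm. Qed.

Lemma norm_le_dist (B : Banach) (x y : B) : vnorm y <= vnorm x + vdist y x.
Proof. unfold vdist.
  assert (y = vadd (vadd y (vopp x)) x).
  { rewrite <- vadd_assoc, (vadd_comm B (vopp x) x), vadd_opp, vadd_zero. auto. }
  rewrite H at 1. rewrite Rplus_comm. apply vnorm_triangle. Qed.

Lemma norm_dist_abs (B : Banach) (x y : B) : Rabs (vnorm y - vnorm x) <= vdist y x.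
Proof. pose proof (norm_le_dist B x y). pose proof (norm_le_dist B y x).
  rewrite vdist_sym in H0. apply Rabs_le. lra. Qed.

Lemma vnorm_pos_nz (B : Banach) (x : B) : x <> vzero -> 0 < vnorm x.
Proof. intros H. destruct (vnorm_nonneg B x) as [h|h]; auto. exfalso; apply H, vnorm_eq0; auto. Qed.
Definition shift {U : Banach} (t : R) (u : R -> U) : R -> U := fun s => u (t + s).

Lemma outer_le_transl A c t : outer_le A c -> outer_le (fun s => A (t + s)) c.
Proof.
  intros H eta He. destruct (H eta He) as [a [b [H1 [H2 H3]]]].
  exists (fun n => a n - t), (fun n => b n - t). split; [|split].
  - intros n; specialize (H1 n); lra.
  - intros s Hs. destruct (H2 _ Hs) as [n Hn]. exists n. lra.
  - intros n. rewrite (sum_eq _ (fun k => b k - a k)). apply H3. intros; ring.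
Qed.

Lemma outer_le_mono A B c : outer_le A c -> (forall s, B s -> A s) -> outer_le B c.
Proof.
  intros H HBA eta He. destruct (H eta He) as [a [b [H1 [H2 H3]]]].
  exists a, b. split; [|split]; auto.
Qed.

Lemma leb_meas_transl A t : leb_measurable A -> leb_measurable (fun s => A (t + s)).
Proof.
  intros H eps He. destruct (H eps He) as [G [HG [HAG HGA]]].
  exists (fun s => G (t + s)). split; [|split].
  - intros x Hx. destruct (HG _ Hx) as [d [Hd Hd']]. exists d. split; auto.
    intros y Hy. apply Hd'. replace (t + y - (t + x)) with (y - x) by ring. auto.
  - intros s Hs. apply HAG; auto.
  - apply (outer_le_transl (fun s => G s /\ ~ A s) eps t HGA).
Qed.

Definition lshift {U : Banach} (t : R) (l : list ((R -> Prop) * U)) : list ((R -> Prop) * U) :=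
  map (fun p => ((fun s => fst p (t + s)), snd p)) l.

Lemma simple_eval_shift {U : Banach} t (l : list ((R -> Prop) * U)) s :
  simple_eval (lshift t l) s = simple_eval l (t + s).
Proof. induction l as [|p l IH]; simpl; auto. rewrite IH. reflexivity. Qed.

Lemma simple_fun_shift {U : Banach} t (l : list ((R -> Prop) * U)) :
  simple_fun l -> simple_fun (lshift t l).
Proof. unfold simple_fun, lshift. induction 1; simpl; constructor; auto.
  simpl. apply leb_meas_transl; auto. Qed.

Lemma Linf_shift {U : Banach} (u : R -> U) t : 0 <= t -> Linf u -> Linf (shift t u).
Proof.
  intros Ht [[sq [Hs Hn]] [M HM]]. split.
  - exists (fun n => lshift t (sq n)). split.
    + intros n; apply simple_fun_shift; auto.
    + eapply outer_le_mono. apply (outer_le_transl _ 0 t Hn).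
      intros x [Hx Hc]. split. lra. intros Hc'. apply Hc.
      intros eps He. destruct (Hc' eps He) as [N HN]. exists N. intros n Hn'.
      rewrite simple_eval_shift. apply HN; auto.
  - exists M. eapply outer_le_mono. apply (outer_le_transl _ 0 t HM).
    intros x [Hx Hc]. split; [lra|auto].
Qed.

Definition LS {U : Banach} (u : R -> U) : R -> Prop :=
  fun M => 0 <= M /\ null_set (fun t => 0 <= t /\ vnorm (u t) > M).

Lemma glb_exists E : (exists x, E x) -> (forall x, E x -> 0 <= x) -> exists m, is_glb E m.
Proof.
  intros [x0 Hx0] Hpos.
  set (F := fun y => E (- y)).
  assert (HF : bound F). { exists 0. intros y Hy. specialize (Hpos _ Hy). lra. }
  assert (HFn : exists y, F y). { exists (- x0). unfold F. rewrite Ropp_involutive. auto. }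
  destruct (completeness F HF HFn) as [m [Hm1 Hm2]].
  exists (- m). split.
  - intros x Hx. assert (F (- x)) by (unfold F; rewrite Ropp_involutive; auto).
    specialize (Hm1 _ H). lra.
  - intros m' Hm'. assert (m <= - m'). { apply Hm2. intros y Hy. specialize (Hm' _ Hy). lra. } lra.
Qed.

Lemma linf_norm_spec {U : Banach} (u : R -> U) : ess_bounded u -> is_glb (LS u) (linf_norm u).
Proof.
  intros [M HM]. unfold linf_norm. apply epsilon_spec. apply glb_exists.
  - exists (Rmax 0 M). split. apply Rmax_l. eapply outer_le_mono. apply HM.
    intros t [Ht Hn]. split; auto. pose proof (Rmax_r 0 M). lra.
  - intros x [Hx _]; auto.
Qed.

Lemma linf_norm_nonneg {U : Banach} (u : R -> U) : Linf u -> 0 <= linf_norm u.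
Proof. intros [_ Hb]. destruct (linf_norm_spec u Hb) as [_ H]. apply H. intros x [Hx _]; auto. Qed.

Lemma linf_norm_shift {U : Banach} (u : R -> U) t : 0 <= t -> Linf u ->
  linf_norm (shift t u) <= linf_norm u.
Proof.
  intros Ht Hu. pose proof (Linf_shift u t Ht Hu) as [_ Hb'].
  destruct Hu as [_ Hb].
  destruct (linf_norm_spec u Hb) as [_ H2]. destruct (linf_norm_spec _ Hb') as [H1' _].
  apply H2. intros M [HM0 HMn]. apply H1'. split; auto.
  eapply outer_le_mono. apply (outer_le_transl _ 0 t HMn).
  intros x [Hx Hc]. split. lra. auto.
Qed.
Definition contF (f : R -> R) (a b : R) : Prop :=
  forall s, a <= s <= b -> forall eps, eps > 0 -> exists d, d > 0 /\
    forall s', a <= s' <= b -> Rabs (s' - s) < d -> Rabs (f s' - f s) < eps.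

Lemma contF_affine f k a b : contF f a b -> contF (fun s => f s + k * (s - a)) a b.
Proof.
  intros H s Hs eps He. destruct (H s Hs (eps/2) ltac:(lra)) as [d [Hd Hd']].
  set (d2 := eps / 2 / (Rabs k + 1)).
  assert (Hd2 : d2 > 0). { unfold d2. unfold Rdiv. apply Rmult_lt_0_compat. lra.
    apply Rinv_0_lt_compat. pose proof (Rabs_pos k); lra. }
  exists (Rmin d d2). split. apply Rmin_pos; lra.
  intros s' Hs' Hss. pose proof (Rmin_l d d2). pose proof (Rmin_r d d2).
  specialize (Hd' s' Hs' ltac:(lra)).
  replace (f s' + k * (s' - a) - (f s + k * (s - a))) with ((f s' - f s) + k * (s' - s)) by ring.
  eapply Rle_lt_trans. apply Rabs_triang. rewrite Rabs_mult.
  assert (Rabs k * Rabs (s' - s) <= Rabs k * d2).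
  { apply Rmult_le_compat_l. apply Rabs_pos. lra. }
  assert (Rabs k * d2 < eps / 2).
  { unfold d2. pose proof (Rabs_pos k).
    apply Rle_lt_trans with ((Rabs k + 1) * (eps / 2 / (Rabs k + 1)) - eps / 2 / (Rabs k + 1)).
    - assert (0 < eps / 2 / (Rabs k + 1)) by (unfold Rdiv; apply Rmult_lt_0_compat; [lra|apply Rinv_0_lt_compat; lra]). lra.
    - replace ((Rabs k + 1) * (eps / 2 / (Rabs k + 1))) with (eps / 2) by (field; lra).
      assert (0 < eps / 2 / (Rabs k + 1)) by (unfold Rdiv; apply Rmult_lt_0_compat; [lra|apply Rinv_0_lt_compat; lra]). lra. }
  lra.
Qed.

Lemma ML_eps (f : R -> R) a b c eps : a <= b -> eps > 0 -> contF f a b ->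
  (forall s, a < s < b -> limsup0_le (fun h => (f (s + h) - f s) / h) (- c)) ->
  f b + (c - eps) * (b - a) <= f a + eps.
Proof.
  intros Hab He Hc Hd.
  set (g := fun s => f s + (c - eps) * (s - a)).
  assert (Hg : contF g a b) by (apply contF_affine; auto).
  assert (ga : g a = f a) by (unfold g; ring).
  set (S := fun s => a <= s <= b /\ forall s', a <= s' <= s -> g s' <= g a + eps).
  assert (HSa : S a). { split. lra. intros s' Hs'. replace s' with a by lra. lra. }
  assert (HSb : bound S). { exists b. intros s [Hs _]. lra. }
  destruct (completeness S HSb (ex_intro _ a HSa)) as [m [Hm1 Hm2]].
  assert (Ham : a <= m) by (apply Hm1; auto).
  assert (Hmb : m <= b) by (apply Hm2; intros s [Hs _]; lra).
  assert (C1 : forall s', a <= s' < m -> g s' <= g a + eps).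
  { intros s' Hs'. destruct (classic (exists s, S s /\ s' < s)) as [[s [[_ Hs] Hss]] | Hn].
    - apply Hs. lra.
    - exfalso. assert (m <= s'). { apply Hm2. intros s Hs. destruct (Rle_or_lt s s') as [h|h]; auto.
        exfalso; apply Hn; exists s; auto. } lra. }
  assert (C2 : g m <= g a + eps).
  { destruct (Rle_lt_or_eq_dec a m Ham) as [Hlt | Heq].
    - destruct (Rle_or_lt (g m) (g a + eps)) as [h|h]; auto. exfalso.
      destruct (Hg m ltac:(lra) (g m - (g a + eps)) ltac:(lra)) as [d [Hdp Hd']].
      set (s' := Rmax a (m - d / 2)).
      assert (Hs'1 : a <= s') by apply Rmax_l. assert (m - d/2 <= s') by apply Rmax_r.
      assert (Hs'2 : s' < m). { unfold s', Rmax; destruct Rle_dec; lra. }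
      specialize (Hd' s' ltac:(lra)). assert (Rabs (s' - m) < d) by (rewrite Rabs_left by lra; lra).
      specialize (Hd' H0). specialize (C1 s' ltac:(lra)). apply Rabs_def2 in Hd'. lra.
    - subst m. lra. }
  assert (HSm : S m). { split. lra. intros s' Hs'. destruct (Rle_lt_or_eq_dec s' m ltac:(lra)) as [h|h].
    apply C1; lra. subst; auto. }
  assert (Hmeq : m = b).
  { destruct (Rle_lt_or_eq_dec m b Hmb) as [Hlt | Heq]; auto. exfalso.
    assert (exists h0, h0 > 0 /\ m + h0 <= b /\ forall s', m <= s' <= m + h0 -> g s' <= g a + eps) as [h0 [Hh0 [Hh0b Hh0']]].
    { destruct (Rle_lt_or_eq_dec a m Ham) as [Ham' | Heq].
      - destruct (Hd m ltac:(lra) (eps / 2) ltac:(lra)) as [d [Hdp Hd']].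
        exists (Rmin (d / 2) (b - m)). split. apply Rmin_pos; lra. split.
        pose proof (Rmin_r (d/2) (b - m)); lra.
        intros s' Hs'. pose proof (Rmin_l (d/2) (b - m)).
        destruct (Rle_lt_or_eq_dec m s' ltac:(lra)) as [hs | hs]; [| subst; auto].
        specialize (Hd' (s' - m) ltac:(lra)). replace (m + (s' - m)) with s' in Hd' by ring.
        assert (f s' - f m <= (- c + eps / 2) * (s' - m)).
        { apply Rmult_le_reg_r with (/ (s' - m)). apply Rinv_0_lt_compat; lra.
          replace ((- c + eps / 2) * (s' - m) * / (s' - m)) with (- c + eps / 2) by (field; lra).
          unfold Rdiv in Hd'. lra. }
        unfold g in *. nra.
      - subst m. destruct (Hg a ltac:(lra) eps He) as [d [Hdp Hd']].
        exists (Rmin (d / 2) (b - a)). split. apply Rmin_pos; lra. split.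
        pose proof (Rmin_r (d/2) (b - a)); lra.
        intros s' Hs'. pose proof (Rmin_l (d/2) (b - a)). pose proof (Rmin_r (d/2) (b - a)).
        assert (Rabs (s' - a) < d) by (rewrite Rabs_right by lra; lra).
        specialize (Hd' s' ltac:(lra) H1). apply Rabs_def2 in Hd'. lra. }
    assert (S (m + h0)).
    { split. lra. intros s' Hs'. destruct (Rle_or_lt s' m) as [h|h].
      apply (proj2 HSm); lra. apply Hh0'; lra. }
    specialize (Hm1 _ H). lra. }
  subst m. destruct HSm as [_ HSm]. specialize (HSm b ltac:(lra)). unfold g in HSm.
  replace (f a + (c - eps) * (a - a)) with (f a) in HSm by ring. lra.
Qed.

Lemma ML (f : R -> R) a b c : a <= b -> contF f a b ->
  (forall s, a < s < b -> limsup0_le (fun h => (f (s + h) - f s) / h) (- c)) ->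
  f b <= f a - c * (b - a).
Proof.
  intros Hab Hc Hd. destruct (Rle_or_lt (f b) (f a - c * (b - a))) as [h|h]; auto. exfalso.
  set (D := f b - (f a - c * (b - a))).
  set (eps := D / (2 * (b - a + 1))).
  assert (Heps : eps > 0). { unfold eps. unfold Rdiv. apply Rmult_lt_0_compat. unfold D; lra.
    apply Rinv_0_lt_compat; lra. }
  pose proof (ML_eps f a b c eps Hab Heps Hc Hd).
  assert (eps * (b - a + 1) = D / 2) by (unfold eps; field; lra).
  unfold D in H0. nra.
Qed.
Lemma K_nonneg g r : class_K g -> 0 <= r -> 0 <= g r.
Proof. intros [H _] Hr; auto. Qed.
Lemma K_mono g r s : class_K g -> 0 <= r -> r <= s -> g r <= g s.
Proof. intros [_ [_ [H _]]] Hr Hrs. destruct (Rle_lt_or_eq_dec r s Hrs) as [h|h].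
  left; apply H; auto. subst; lra. Qed.
Lemma K_strict g r s : class_K g -> 0 <= r -> r < s -> g r < g s.
Proof. intros [_ [_ [H _]]] Hr Hrs. apply H; auto. Qed.
Lemma K_zero g : class_K g -> g 0 = 0.
Proof. intros [_ [_ [_ H]]]; auto. Qed.
Lemma K_pos g r : class_K g -> 0 < r -> 0 < g r.
Proof. intros Hg Hr. rewrite <- (K_zero g Hg). apply K_strict; auto; lra. Qed.
Lemma K_cont0 g : class_K g -> forall eps, eps > 0 -> exists d, d > 0 /\ forall s, 0 <= s <= d -> g s <= eps.
Proof. intros Hg eps He. destruct Hg as [H0 [Hc [Hs Hz]]].
  destruct (Hc 0 ltac:(lra) eps He) as [d [Hd Hd']]. exists (d/2). split. lra.
  intros s Hs'. assert (Rabs (s - 0) < d) by (rewrite Rminus_0_r, Rabs_right; lra).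
  specialize (Hd' s ltac:(lra) H). rewrite Hz, Rminus_0_r in Hd'.
  apply Rabs_def2 in Hd'. lra. Qed.
Lemma Kinf_big g M : class_Kinf g -> 0 <= M -> exists r, 0 < r /\ M < g r.
Proof. intros [Hg Hu] HM. destruct (Hu M) as [r [Hr Hr']]. exists r. split; auto.
  destruct (Rle_lt_or_eq_dec 0 r Hr) as [h|h]; auto. subst. rewrite (K_zero g Hg) in Hr'. lra. Qed.
Lemma K_cont g : class_K g -> cont_on_Rplus g.
Proof. intros [_ [H _]]; auto. Qed.

Lemma last_entry (g : R -> R) t rho : 0 <= t -> contF g 0 t ->
  (exists s0, 0 <= s0 <= t /\ g s0 <= rho) ->
  exists m, 0 <= m <= t /\ g m <= rho /\ forall s, m < s <= t -> rho < g s.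
Proof.
  intros Ht Hc [s0 [Hs0 Hg0]].
  set (S := fun s => 0 <= s <= t /\ g s <= rho).
  assert (HSb : bound S). { exists t. intros s [Hs _]. lra. }
  destruct (completeness S HSb (ex_intro _ s0 (conj Hs0 Hg0))) as [m [Hm1 Hm2]].
  assert (s0 <= m) by (apply Hm1; split; auto).
  assert (m <= t) by (apply Hm2; intros s [Hs _]; lra).
  exists m. split. lra. split.
  - destruct (Rle_or_lt (g m) rho) as [h|h]; auto. exfalso.
    destruct (Hc m ltac:(lra) (g m - rho) ltac:(lra)) as [d [Hd Hd']].
    destruct (classic (exists s, S s /\ m - d < s)) as [[s [[Hs1 Hs2] Hs3]] | Hn].
    + assert (s <= m) by (apply Hm1; split; auto).
      assert (Rabs (s - m) < d) by (rewrite Rabs_left1 by lra; lra).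
      specialize (Hd' s Hs1 H2). apply Rabs_def2 in Hd'. lra.
    + assert (m <= m - d). { apply Hm2. intros s Hs. destruct (Rle_or_lt s (m - d)) as [h'|h']; auto.
        exfalso; apply Hn; exists s; auto. } lra.
  - intros s Hs. destruct (Rle_or_lt (g s) rho) as [h|h]; auto.
    assert (s <= m) by (apply Hm1; split; auto; lra). lra.
Qed.
Definition Hyps {X U : Banach} (phi : R -> X -> (R -> U) -> X) (V : X -> R) (al sg : R -> R) : Prop :=
  control_system phi /\ continuous_on_X V /\ (forall x, 0 <= V x) /\ class_Kinf al /\ class_K sg /\
  (forall x u, Linf u -> dini_le phi V x u (- al (vnorm x) + sg (linf_norm u))).

Lemma split_traj {X U : Banach} (phi : R -> X -> (R -> U) -> X) x u s t :
  control_system phi -> Linf u -> 0 <= s <= t ->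
  phi t x u = phi (t - s) (phi s x u) (shift s u).
Proof. intros [_ [_ [_ Hcoc]]] Hu Hst. unfold shift. rewrite Hcoc by (auto; lra).
  f_equal. ring. Qed.

Lemma traj_contF {X U : Banach} (phi : R -> X -> (R -> U) -> X) (V : X -> R) x u a b :
  control_system phi -> continuous_on_X V -> Linf u -> 0 <= a ->
  contF (fun s => V (phi s x u)) a b.
Proof.
  intros [_ [_ [Hc _]]] HV Hu Ha s Hs eps He.
  destruct (HV (phi s x u) eps He) as [d1 [Hd1 Hd1']].
  destruct (Hc x u Hu s ltac:(lra) d1 Hd1) as [d [Hd Hd']].
  exists d. split; auto. intros s' Hs' Hss. apply Hd1'. apply Hd'; auto. lra.
Qed.

Lemma norm_contF {X U : Banach} (phi : R -> X -> (R -> U) -> X) x u a b :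
  control_system phi -> Linf u -> 0 <= a ->
  contF (fun s => vnorm (phi s x u)) a b.
Proof.
  intros [_ [_ [Hc _]]] Hu Ha s Hs eps He.
  destruct (Hc x u Hu s ltac:(lra) eps He) as [d [Hd Hd']].
  exists d. split; auto. intros s' Hs' Hss. eapply Rle_lt_trans. apply norm_dist_abs.
  apply Hd'; auto. lra.
Qed.

Lemma limsup_mono f c1 c2 : limsup0_le f c1 -> c1 <= c2 -> limsup0_le f c2.
Proof. intros H Hc eps He. destruct (H eps He) as [d [Hd Hd']]. exists d; split; auto.
  intros t Ht. specialize (Hd' t Ht). lra. Qed.

Lemma traj_dini {X U : Banach} (phi : R -> X -> (R -> U) -> X) V al sg x u s :
  Hyps phi V al sg -> Linf u -> 0 <= s ->
  limsup0_le (fun h => (V (phi (s + h) x u) - V (phi s x u)) / h)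
    (- al (vnorm (phi s x u)) + sg (linf_norm u)).
Proof.
  intros [Hcs [HV [HV0 [Hal [Hsg Hd]]]]] Hu Hs.
  pose proof (Linf_shift u s Hs Hu) as Hu'.
  specialize (Hd (phi s x u) (shift s u) Hu').
  assert (sg (linf_norm (shift s u)) <= sg (linf_norm u)).
  { apply K_mono; auto. apply linf_norm_nonneg; auto. apply linf_norm_shift; auto. }
  intros eps He. destruct (Hd eps He) as [d [Hd0 Hd']]. exists d. split; auto.
  intros h Hh. specialize (Hd' h Hh). simpl in Hd'.
  destruct Hcs as [_ [_ [_ Hcoc]]]. unfold shift in Hd', H. rewrite Hcoc in Hd' by (auto; lra).
  lra.
Qed.

Lemma F1 {X U : Banach} (phi : R -> X -> (R -> U) -> X) V al sg x u a b rho :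
  Hyps phi V al sg -> Linf u -> 0 <= a <= b -> 0 <= rho -> 2 * sg (linf_norm u) <= al rho ->
  (forall s, a < s < b -> rho <= vnorm (phi s x u)) ->
  V (phi b x u) <= V (phi a x u) - (al rho / 2) * (b - a).
Proof.
  intros H Hu Hab Hr Hs Hn. pose proof H as [Hcs [HV [HV0 [[Hal _] [Hsg Hd]]]]].
  apply (ML (fun s => V (phi s x u)) a b (al rho / 2)). lra.
  apply traj_contF; auto; lra.
  intros s Hs'. eapply limsup_mono. apply (traj_dini phi V al sg x u s H Hu ltac:(lra)).
  pose proof (K_mono al rho (vnorm (phi s x u)) Hal Hr (Hn s Hs')). lra.
Qed.
Lemma F3 {X U : Banach} (phi : R -> X -> (R -> U) -> X) V al sg psi2 x u rho t :
  Hyps phi V al sg -> (forall y, V y <= psi2 (vnorm y)) -> class_K psi2 ->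
  Linf u -> 0 <= rho -> 2 * sg (linf_norm u) <= al rho -> 0 <= t ->
  V (phi t x u) <= Rmax (psi2 (vnorm x)) (psi2 rho).
Proof.
  intros H HVb Hpsi Hu Hr Hs Ht. pose proof H as [Hcs [HV [HV0 [[Hal _] [Hsg Hd]]]]].
  pose proof (K_nonneg al rho Hal Hr).
  pose proof (Rmax_l (psi2 (vnorm x)) (psi2 rho)). pose proof (Rmax_r (psi2 (vnorm x)) (psi2 rho)).
  destruct (classic (exists s0, 0 <= s0 <= t /\ vnorm (phi s0 x u) <= rho)) as [Hex | Hn].
  - destruct (last_entry (fun s => vnorm (phi s x u)) t rho Ht (norm_contF phi x u 0 t Hcs Hu ltac:(lra)) Hex)
      as [m [Hm [Hm1 Hm2]]].
    assert (V (phi t x u) <= V (phi m x u) - (al rho / 2) * (t - m)).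
    { apply F1 with sg; auto; try lra. intros s Hs'. left. apply Hm2. lra. }
    pose proof (HVb (phi m x u)). pose proof (K_mono psi2 _ _ Hpsi (vnorm_nonneg _ _) Hm1).
    assert (0 <= (al rho / 2) * (t - m)) by (apply Rmult_le_pos; lra). lra.
  - assert (V (phi t x u) <= V (phi 0 x u) - (al rho / 2) * (t - 0)).
    { apply F1 with sg; auto; try lra. intros s Hs'. destruct (Rle_or_lt rho (vnorm (phi s x u))) as [h|h]; auto.
      exfalso. apply Hn. exists s. split. lra. lra. }
    destruct Hcs as [Hphi0 _]. rewrite Hphi0 in H3 by auto.
    pose proof (HVb x). assert (0 <= (al rho / 2) * (t - 0)) by (apply Rmult_le_pos; lra). lra.
Qed.

Lemma F4 {X U : Banach} (phi : R -> X -> (R -> U) -> X) V al sg psi2 x u rho :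
  Hyps phi V al sg -> (forall y, V y <= psi2 (vnorm y)) -> class_K psi2 ->
  Linf u -> 0 < rho -> 2 * sg (linf_norm u) <= al rho ->
  exists s, 0 <= s <= 2 * psi2 (vnorm x) / al rho + 1 /\ vnorm (phi s x u) < rho.
Proof.
  intros H HVb Hpsi Hu Hr Hs. pose proof H as [Hcs [HV [HV0 [[Hal _] [Hsg Hd]]]]].
  pose proof (K_pos al rho Hal Hr).
  pose proof (K_nonneg psi2 (vnorm x) Hpsi (vnorm_nonneg _ _)).
  set (T := 2 * psi2 (vnorm x) / al rho + 1).
  assert (HT : 0 <= T). { unfold T. assert (0 <= 2 * psi2 (vnorm x) / al rho).
    unfold Rdiv. apply Rmult_le_pos. lra. left; apply Rinv_0_lt_compat; lra. lra. }
  destruct (classic (exists s, 0 <= s <= T /\ vnorm (phi s x u) < rho)) as [Hex | Hn]; auto.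
  exfalso.
  assert (V (phi T x u) <= V (phi 0 x u) - (al rho / 2) * (T - 0)).
  { apply F1 with sg; auto; try lra. intros s Hs'. destruct (Rle_or_lt rho (vnorm (phi s x u))) as [h|h]; auto.
    exfalso. apply Hn. exists s. split; lra. }
  destruct Hcs as [Hphi0 _]. rewrite Hphi0 in H2 by auto.
  assert ((al rho / 2) * (T - 0) = psi2 (vnorm x) + al rho / 2) by (unfold T; field; lra).
  pose proof (HVb x). pose proof (HV0 (phi T x u)). lra.
Qed.

Lemma ULS_lemma {X U : Banach} (phi : R -> X -> (R -> U) -> X) V al sg psi2 :
  Hyps phi V al sg -> (forall y, V y <= psi2 (vnorm y)) -> class_K psi2 -> CEP phi ->
  forall eps, eps > 0 -> exists eta, eta > 0 /\ forall x u t, Linf u -> vnorm x <= eta ->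
    linf_norm u <= eta -> 0 <= t -> vnorm (phi t x u) <= eps.
Proof.
  intros H HVb Hpsi [_ Hcep] eps He. pose proof H as [Hcs [HV [HV0 [[Hal _] [Hsg Hd]]]]].
  destruct (Hcep eps 1 He ltac:(lra)) as [delta [Hdel Hdel']].
  pose proof (K_pos al delta Hal Hdel).
  destruct (K_cont0 psi2 Hpsi (al delta / 4) ltac:(lra)) as [d1 [Hd1 Hd1']].
  pose proof (Rmin_l delta d1) as Hq1. pose proof (Rmin_r delta d1) as Hq2.
  set (r1 := Rmin delta d1) in *.
  assert (Hr1 : 0 < r1) by (apply Rmin_pos; lra).
  pose proof (K_pos al r1 Hal Hr1).
  destruct (K_cont0 sg Hsg (al r1 / 2) ltac:(lra)) as [d2 [Hd2 Hd2']].
  exists (Rmin r1 d2). split. apply Rmin_pos; lra.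
  pose proof (Rmin_l r1 d2) as Hq3. pose proof (Rmin_r r1 d2) as Hq4.
  intros x u t Hu Hx Hv Ht.
  pose proof (linf_norm_nonneg u Hu).
  assert (Hsv : 2 * sg (linf_norm u) <= al r1) by (pose proof (Hd2' (linf_norm u) ltac:(lra)); lra).
  pose proof (K_mono al r1 delta Hal ltac:(lra) Hq1).
  destruct (Rle_or_lt (vnorm (phi t x u)) eps) as [h|Hbig]; auto. exfalso.
  destruct (Rle_or_lt t 1) as [Ht1 | Ht1].
  - pose proof (Hdel' t x u ltac:(lra) Hu ltac:(lra) ltac:(lra)). lra.
  - assert (Hout : forall s, t - 1 < s < t -> delta <= vnorm (phi s x u)).
    { intros s Hs. destruct (Rle_or_lt delta (vnorm (phi s x u))) as [h|h]; auto. exfalso.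
      rewrite (split_traj phi x u s t Hcs Hu ltac:(lra)) in Hbig.
      pose proof (linf_norm_shift u s ltac:(lra) Hu).
      pose proof (Hdel' (t - s) (phi s x u) (shift s u) ltac:(lra) (Linf_shift u s ltac:(lra) Hu) ltac:(lra) ltac:(lra)).
      lra. }
    assert (V (phi t x u) <= V (phi (t - 1) x u) - (al delta / 2) * (t - (t - 1))).
    { apply F1 with sg; auto; try lra. }
    pose proof (F3 phi V al sg psi2 x u r1 (t - 1) H HVb Hpsi Hu ltac:(lra) Hsv ltac:(lra)).
    pose proof (K_mono psi2 (vnorm x) r1 Hpsi (vnorm_nonneg _ _) ltac:(lra)).
    pose proof (Hd1' r1 ltac:(lra)).
    assert (Rmax (psi2 (vnorm x)) (psi2 r1) <= al delta / 4).
    { unfold Rmax; destruct Rle_dec; lra. }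
    pose proof (HV0 (phi t x u)). lra.
Qed.

Lemma BND_lemma {X U : Banach} (phi : R -> X -> (R -> U) -> X) V al sg psi2 :
  Hyps phi V al sg -> (forall y, V y <= psi2 (vnorm y)) -> class_K psi2 -> BRS phi ->
  forall R0, 0 <= R0 -> exists M, forall x u t, Linf u -> vnorm x <= R0 ->
    linf_norm u <= R0 -> 0 <= t -> vnorm (phi t x u) <= M.
Proof.
  intros H HVb Hpsi Hbrs R0 HR0. pose proof H as [Hcs [HV [HV0 [Hal [Hsg Hd]]]]].
  destruct (Kinf_big al (2 * sg R0) Hal ltac:(pose proof (K_nonneg sg R0 Hsg HR0); lra)) as [rho1 [Hr1 Hr1']].
  destruct Hal as [Hal _].
  set (K := Rmax (psi2 R0) (psi2 rho1)).
  pose proof (K_nonneg psi2 R0 Hpsi HR0). pose proof (Rmax_l (psi2 R0) (psi2 rho1)).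
  pose proof (Rmax_r (psi2 R0) (psi2 rho1)).
  pose proof (K_pos al rho1 Hal Hr1).
  set (h := 2 * K / al rho1 + 1).
  assert (Hh : 1 <= h). { unfold h. assert (0 <= 2 * K / al rho1).
    unfold Rdiv. apply Rmult_le_pos. unfold K; lra. left; apply Rinv_0_lt_compat; lra. lra. }
  destruct (Hbrs (R0 + rho1 + 1) h ltac:(lra) ltac:(lra)) as [M HM].
  exists M. intros x u t Hu Hx Hv Ht.
  pose proof (linf_norm_nonneg u Hu).
  assert (Hsv : 2 * sg (linf_norm u) <= al rho1) by (pose proof (K_mono sg _ _ Hsg H4 Hv); lra).
  destruct (Rle_or_lt t h) as [Hth | Hth].
  - apply HM; auto; lra.
  - destruct (classic (exists s, t - h <= s <= t /\ vnorm (phi s x u) <= rho1)) as [[s [Hs Hs']] | Hn].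
    + rewrite (split_traj phi x u s t Hcs Hu ltac:(lra)).
      pose proof (linf_norm_shift u s ltac:(lra) Hu).
      apply HM; auto; try lra. apply Linf_shift; auto; lra.
    + exfalso.
      assert (V (phi t x u) <= V (phi (t - h) x u) - (al rho1 / 2) * (t - (t - h))).
      { apply F1 with sg; auto; try lra. intros s Hs.
        destruct (Rle_or_lt rho1 (vnorm (phi s x u))) as [q|q]; auto.
        exfalso; apply Hn; exists s; split; lra. }
      pose proof (F3 phi V al sg psi2 x u rho1 (t - h) H HVb Hpsi Hu ltac:(lra) Hsv ltac:(lra)).
      assert (Rmax (psi2 (vnorm x)) (psi2 rho1) <= K).
      { pose proof (K_mono psi2 _ _ Hpsi (vnorm_nonneg _ _) Hx). unfold K, Rmax in *.
        repeat destruct Rle_dec; lra. }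
      assert ((al rho1 / 2) * (t - (t - h)) = K + al rho1 / 2) by (unfold h; field; lra).
      pose proof (HV0 (phi t x u)). lra.
Qed.
Lemma div_mono2 A A' a b : 0 <= A -> A <= A' -> 0 < a -> a <= b -> A / b <= A' / a.
Proof. intros. unfold Rdiv. apply Rmult_le_compat; try lra.
  left; apply Rinv_0_lt_compat; lra. apply Rinv_le_contravar; lra. Qed.

Lemma KL_K0 b : class_KL b -> class_K (fun r => b r 0).
Proof. intros [H _]. apply H. lra. Qed.

Lemma ISS_from {X U : Banach} (phi : R -> X -> (R -> U) -> X) al sg psi2 :
  control_system phi -> class_Kinf al -> class_K sg -> class_K psi2 ->
  (forall eps, eps > 0 -> exists eta, eta > 0 /\ forall x u t, Linf u -> vnorm x <= eta ->
    linf_norm u <= eta -> 0 <= t -> vnorm (phi t x u) <= eps) ->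
  (forall R0, 0 <= R0 -> exists M, forall x u t, Linf u -> vnorm x <= R0 ->
    linf_norm u <= R0 -> 0 <= t -> vnorm (phi t x u) <= M) ->
  (forall x u rho, Linf u -> 0 < rho -> 2 * sg (linf_norm u) <= al rho ->
    exists s, 0 <= s <= 2 * psi2 (vnorm x) / al rho + 1 /\ vnorm (phi s x u) < rho) ->
  ISS phi.
Proof.
  intros Hcs Hal Hsg Hpsi HULS HBND HENT.
  pose proof Hal as [HalK Halu].
  set (PB := fun r t p => t = 0 /\ exists x u s, Linf u /\ vnorm x <= r /\ linf_norm u <= r /\ 0 <= s /\
     p = vnorm (phi s x u)).
  destruct (KLmaj PB) as [bB [HbB HbB']].
  { intros eps He. destruct (HULS eps He) as [eta [Heta Heta']]. exists eta. split; auto.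
    intros r t p Hr Ht [_ [x [u [s [Hu [Hx [Hv [Hs Hp]]]]]]]]. subst p. apply Heta'; auto; lra. }
  { intros R0. destruct (HBND (Rmax 0 R0) (Rmax_l _ _)) as [M HM]. exists M.
    intros r t p Hr Ht [_ [x [u [s [Hu [Hx [Hv [Hs Hp]]]]]]]]. subst p. pose proof (Rmax_r 0 R0).
    apply HM; auto; lra. }
  { intros eps He R0. exists 1. intros r t p Hr Ht HT [Ht0 _]. lra. }
  set (gB := fun r => bB r 0).
  assert (HgB : class_K gB) by (apply KL_K0; auto).
  assert (GB : forall x u s r, Linf u -> vnorm x <= r -> linf_norm u <= r -> 0 <= s ->
     vnorm (phi s x u) <= gB r).
  { intros x u s r Hu Hx Hv Hs. unfold gB. apply HbB'. pose proof (vnorm_nonneg _ x); lra. lra.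
    split; auto. exists x, u, s. split; [exact Hu|]. repeat split; auto. }
  set (PR := fun v t p => t = 0 /\ 0 <= p /\ al p <= 2 * sg v).
  destruct (KLmaj PR) as [bR [HbR HbR']].
  { intros eps He. pose proof (K_pos al eps HalK He).
    destruct (K_cont0 sg Hsg (al eps / 4) ltac:(lra)) as [d [Hd Hd']]. exists d. split; auto.
    intros r t p Hr Ht [_ [Hp Hap]]. destruct (Rle_or_lt p eps) as [h|h]; auto.
    pose proof (K_strict al eps p HalK ltac:(lra) h). pose proof (Hd' r Hr). lra. }
  { intros R0. destruct (Kinf_big al (2 * sg (Rmax 0 R0)) Hal) as [M [HM HM']].
    pose proof (K_nonneg sg (Rmax 0 R0) Hsg (Rmax_l _ _)). lra.
    exists M. intros r t p Hr Ht [_ [Hp Hap]]. destruct (Rle_or_lt p M) as [h|h]; auto.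
    pose proof (K_strict al M p HalK ltac:(lra) h). pose proof (Rmax_r 0 R0).
    pose proof (K_mono sg r (Rmax 0 R0) Hsg ltac:(lra) ltac:(lra)). lra. }
  { intros eps He R0. exists 1. intros r t p Hr Ht HT [Ht0 _]. lra. }
  set (rho := fun v => bR v 0).
  assert (Hrho : class_K rho) by (apply KL_K0; auto).
  assert (RHO : forall v, 0 <= v -> 2 * sg v <= al (rho v)).
  { intros v Hv. destruct (Rle_or_lt (2 * sg v) (al (rho v))) as [h|h]; auto. exfalso.
    pose proof (K_nonneg rho v Hrho Hv).
    destruct (K_cont al HalK (rho v) H (2 * sg v - al (rho v)) ltac:(lra)) as [d [Hd Hd']].
    assert (Hs : Rabs (rho v + d / 2 - rho v) < d) by (rewrite Rabs_right; lra).
    specialize (Hd' (rho v + d / 2) ltac:(lra) Hs). apply Rabs_def2 in Hd'.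
    assert (rho v + d / 2 <= rho v).
    { unfold rho at 2. apply HbR'; auto. lra. split; auto. split; lra. }
    lra. }
  set (PG := fun v t p => t = 0 /\ 0 <= v /\ p = gB (Rmax (rho v) v)).
  destruct (KLmaj PG) as [bG [HbG HbG']].
  { intros eps He. destruct (K_cont0 gB HgB eps He) as [d1 [Hd1 Hd1']].
    destruct (K_cont0 rho Hrho d1 Hd1) as [d2 [Hd2 Hd2']].
    exists (Rmin d1 d2). split. apply Rmin_pos; lra.
    intros r t p Hr Ht [_ [Hv Hp]]. subst p. pose proof (Rmin_l d1 d2). pose proof (Rmin_r d1 d2).
    pose proof (Hd2' r ltac:(lra)). pose proof (K_nonneg rho r Hrho Hv).
    apply Hd1'. unfold Rmax; destruct Rle_dec; lra. }
  { intros R0. set (R1 := Rmax 0 R0). exists (gB (Rmax (rho R1) R1)).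
    intros r t p Hr Ht [_ [Hv Hp]]. subst p. pose proof (Rmax_l 0 R0). pose proof (Rmax_r 0 R0).
    pose proof (K_mono rho r R1 Hrho Hv ltac:(unfold R1; lra)). pose proof (K_nonneg rho r Hrho Hv).
    apply K_mono; auto. unfold Rmax; destruct Rle_dec; lra.
    unfold Rmax at 1 2; repeat destruct Rle_dec; unfold R1 in *; lra. }
  { intros eps He R0. exists 1. intros r t p Hr Ht HT [Ht0 _]. lra. }
  set (gam := fun v => bG v 0).
  assert (Hgam : class_K gam) by (apply KL_K0; auto).
  assert (GAM : forall v, 0 <= v -> gB (Rmax (rho v) v) <= gam v).
  { intros v Hv. unfold gam. apply HbG'; auto. lra. split; auto. }
  assert (BDA : forall x u t, Linf u -> 0 <= t -> vnorm (phi t x u) <= gB (Rmax (vnorm x) (linf_norm u))).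
  { intros x u t Hu Ht. apply GB; auto. apply Rmax_l. apply Rmax_r. }
  assert (SMALLX : forall x u t, Linf u -> 0 <= t -> vnorm x <= linf_norm u ->
     vnorm (phi t x u) <= gam (linf_norm u)).
  { intros x u t Hu Ht Hx. pose proof (linf_norm_nonneg u Hu).
    eapply Rle_trans. apply (GB x u t (Rmax (rho (linf_norm u)) (linf_norm u))); auto.
    pose proof (Rmax_r (rho (linf_norm u)) (linf_norm u)); lra. apply Rmax_r.
    apply GAM; auto. }
  set (PF := fun r t p => exists x u, Linf u /\ vnorm x <= r /\ p = vnorm (phi t x u) - gam (linf_norm u)).
  destruct (KLmaj PF) as [beta [Hbeta Hbeta']].
  { intros eps He. destruct (K_cont0 gB HgB eps He) as [d [Hd Hd']]. exists d. split; auto.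
    intros r t p Hr Ht [x [u [Hu [Hx Hp]]]]. subst p.
    pose proof (linf_norm_nonneg u Hu). pose proof (K_nonneg gam _ Hgam H).
    destruct (Rle_or_lt (vnorm x) (linf_norm u)) as [h|h].
    - pose proof (SMALLX x u t Hu Ht h). lra.
    - pose proof (BDA x u t Hu Ht). assert (Rmax (vnorm x) (linf_norm u) <= d).
      { unfold Rmax; destruct Rle_dec; lra. }
      pose proof (Hd' _ (conj (Rle_trans _ _ _ H (Rmax_r _ _)) H2)). lra. }
  { intros R0. exists (gB (Rmax 0 R0)).
    intros r t p Hr Ht [x [u [Hu [Hx Hp]]]]. subst p.
    pose proof (linf_norm_nonneg u Hu). pose proof (K_nonneg gam _ Hgam H).
    pose proof (K_nonneg gB (Rmax 0 R0) HgB (Rmax_l _ _)).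
    destruct (Rle_or_lt (vnorm x) (linf_norm u)) as [h|h].
    - pose proof (SMALLX x u t Hu Ht h). lra.
    - pose proof (BDA x u t Hu Ht). pose proof (Rmax_r 0 R0).
      assert (gB (Rmax (vnorm x) (linf_norm u)) <= gB (Rmax 0 R0)).
      { apply K_mono; auto. apply Rle_trans with (linf_norm u); auto. apply Rmax_r.
        unfold Rmax at 1; destruct Rle_dec; lra. }
      lra. }
  { intros eps He R0.
    destruct (K_cont0 gB HgB eps He) as [rho0 [Hr0 Hr0']].
    pose proof (K_pos al rho0 HalK Hr0).
    destruct (K_cont0 sg Hsg (al rho0 / 2) ltac:(lra)) as [d' [Hd' Hd'']].
    pose proof (Rmin_l rho0 d') as Hq1. pose proof (Rmin_r rho0 d') as Hq2.
    set (v0 := Rmin rho0 d') in *.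
    assert (Hv0 : 0 < v0) by (apply Rmin_pos; lra).
    pose proof (K_pos rho v0 Hrho Hv0) as Hrv0.
    pose proof (K_pos al (rho v0) HalK Hrv0) as Harv0.
    pose proof (Rmin_l (al rho0) (al (rho v0))) as Ha1. pose proof (Rmin_r (al rho0) (al (rho v0))) as Ha2.
    set (a := Rmin (al rho0) (al (rho v0))) in *.
    assert (Ha : 0 < a) by (apply Rmin_pos; lra).
    set (R1 := Rmax 0 R0).
    pose proof (K_nonneg psi2 R1 Hpsi (Rmax_l _ _)).
    exists (2 * psi2 R1 / a + 1).
    intros r t p Hr Ht HT [x [u [Hu [Hx Hp]]]]. subst p.
    pose proof (linf_norm_nonneg u Hu) as Hv. pose proof (K_nonneg gam _ Hgam Hv).
    assert (Hpx : psi2 (vnorm x) <= psi2 R1).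
    { apply K_mono; auto. apply vnorm_nonneg. pose proof (Rmax_r 0 R0). unfold R1; lra. }
    pose proof (K_nonneg psi2 (vnorm x) Hpsi (vnorm_nonneg _ _)).
    destruct (Rle_or_lt (linf_norm u) v0) as [hv|hv].
    - assert (Hs2 : 2 * sg (linf_norm u) <= al rho0) by (pose proof (Hd'' (linf_norm u) ltac:(lra)); lra).
      destruct (HENT x u rho0 Hu Hr0 Hs2) as [s [Hs Hs']].
      assert (2 * psi2 (vnorm x) / al rho0 <= 2 * psi2 R1 / a) by (apply div_mono2; lra).
      rewrite (split_traj phi x u s t Hcs Hu ltac:(lra)).
      pose proof (linf_norm_shift u s ltac:(lra) Hu).
      assert (vnorm (phi (t - s) (phi s x u) (shift s u)) <= gB rho0).
      { apply GB; auto. apply Linf_shift; auto; lra. lra. lra. lra. }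
      pose proof (Hr0' rho0 ltac:(lra)). lra.
    - pose proof (K_mono rho v0 (linf_norm u) Hrho ltac:(lra) ltac:(lra)) as Hm1.
      pose proof (K_mono al (rho v0) (rho (linf_norm u)) HalK ltac:(lra) Hm1) as Hm2.
      destruct (HENT x u (rho (linf_norm u)) Hu ltac:(lra) (RHO _ Hv)) as [s [Hs Hs']].
      assert (2 * psi2 (vnorm x) / al (rho (linf_norm u)) <= 2 * psi2 R1 / a) by (apply div_mono2; lra).
      rewrite (split_traj phi x u s t Hcs Hu ltac:(lra)).
      pose proof (linf_norm_shift u s ltac:(lra) Hu).
      assert (vnorm (phi (t - s) (phi s x u) (shift s u)) <= gB (Rmax (rho (linf_norm u)) (linf_norm u))).
      { apply GB; auto. apply Linf_shift; auto; lra.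
        pose proof (Rmax_l (rho (linf_norm u)) (linf_norm u)); lra.
        pose proof (Rmax_r (rho (linf_norm u)) (linf_norm u)); lra. lra. }
      pose proof (GAM _ Hv). lra. }
  exists beta, gam. split; auto. split; auto.
  intros x u t Hu Ht.
  assert (vnorm (phi t x u) - gam (linf_norm u) <= beta (vnorm x) t).
  { apply Hbeta'; auto. apply vnorm_nonneg. exists x, u. split; [exact Hu|]. split; auto; lra. }
  lra.
Qed.
Theorem mainTheorem9 (X U : Banach) (phi : R -> X -> (R -> U) -> X) :
  control_system phi -> CEP phi -> BRS phi ->
  (exists V : X -> R, noncoercive_ISS_Lyapunov phi V) ->
  ISS phi.
Proof.
  intros Hcs Hcep Hbrs [V [HVc [HV0 [psi2 [al [sg [Hpsi [Hal [Hsg [HVb HVd]]]]]]]]]].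
  assert (H : Hyps phi V al sg) by exact (conj Hcs (conj HVc (conj HV0 (conj Hal (conj Hsg HVd))))).
  pose proof Hpsi as [HpsiK _]. pose proof Hal as [HalK _].
  destruct (classic (exists x1 : X, x1 <> vzero)) as [[x1 Hx1] | Htriv].
  - assert (VB : forall y, V y <= psi2 (vnorm y)).
    { intros y. destruct (classic (y = vzero)) as [Hy | Hy]; [| apply HVb; auto].
      subst y. rewrite vnorm_zero, (K_zero psi2 HpsiK).
      destruct (Rle_or_lt (V vzero) 0) as [h|h]; auto. exfalso.
      destruct (HVc vzero (V vzero / 2) ltac:(lra)) as [d [Hd Hd']].
      destruct (K_cont0 psi2 HpsiK (V vzero / 4) ltac:(lra)) as [dp [Hdp Hdp']].
      pose proof (vnorm_pos_nz X x1 Hx1) as Hn1.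
      set (lam := Rmin d dp / (2 * vnorm x1)).
      assert (Hm : 0 < Rmin d dp) by (apply Rmin_pos; lra).
      pose proof (Rmin_l d dp). pose proof (Rmin_r d dp).
      assert (Hlam : 0 < lam) by (unfold lam, Rdiv; apply Rmult_lt_0_compat; [lra| apply Rinv_0_lt_compat; lra]).
      set (y := vscal lam x1).
      assert (Hny : vnorm y = Rmin d dp / 2).
      { unfold y. rewrite vnorm_scal, Rabs_right by lra. unfold lam. field. lra. }
      assert (Hy0 : y <> vzero). { intros E. rewrite E, vnorm_zero in Hny. lra. }
      assert (Hdy : vdist y vzero < d).
      { unfold vdist. rewrite vopp_zero, vadd_zero. lra. }
      specialize (Hd' y Hdy). apply Rabs_def2 in Hd'.
      destruct (HVb y Hy0) as [_ HVy].
      pose proof (Hdp' (vnorm y) ltac:(pose proof (vnorm_nonneg X y); lra)). lra. }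
    apply (ISS_from phi al sg psi2 Hcs Hal Hsg HpsiK).
    + apply (ULS_lemma phi V al sg psi2 H VB HpsiK Hcep).
    + apply (BND_lemma phi V al sg psi2 H VB HpsiK Hbrs).
    + intros x u rho Hu Hr Hs. apply (F4 phi V al sg psi2 x u rho H VB HpsiK Hu Hr Hs).
  - assert (Z : forall y : X, vnorm y = 0).
    { intros y. destruct (classic (y = vzero)) as [E|E]. subst; apply vnorm_zero.
      exfalso; apply Htriv; exists y; auto. }
    apply (ISS_from phi al sg psi2 Hcs Hal Hsg HpsiK).
    + intros eps He. exists 1. split. lra. intros. rewrite Z. lra.
    + intros R0 HR0. exists 0. intros. rewrite Z. lra.
    + intros x u rho Hu Hr Hs. exists 0. rewrite (Z (phi 0 x u)). split; [|lra]. split. lra.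
      pose proof (K_pos al rho HalK Hr). pose proof (K_nonneg psi2 (vnorm x) HpsiK (vnorm_nonneg _ _)).
      assert (0 <= 2 * psi2 (vnorm x) / al rho).
      { unfold Rdiv. apply Rmult_le_pos. lra. left; apply Rinv_0_lt_compat; lra. } lra.
Qed.
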